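(* Let $(S,|\cdot|)$ be a finite metric space with $n\ge3$ points, $t\ge 1$, $G'=(S,E')$ a $t$-spanner for $S$, and $G=(S,E)$ the graph obtained from $G'$ by the construction in the context with $f=1$. Let $F\subseteq E$ be a matching in $G$ (i.e., $(S,F)$ has maximum degree at most $1$). Let $p,q\in S$ and let $P'$ be a shortest path between $p$ and $q$ in $G'$. Suppose that at least one edge of $P'$ belongs to $F$ and that $P'$ has at least two edges. Then $G\setminus F$ contains a walk between $p$ and $q$ whose length is at most $3|P'|$, where $|P'|$ is the sum of the weights of the edges of $P'$.
   Context: For a finite metric space $(S,|\cdot|)$, $K_S$ denotes the complete graph on $S$ with edge weights $|pq|$; all graphs on $S$ have edge weights $|pq|$. For a set $F$ of edges, $X\setminus F$ is the graph with the same vertex set as $X$ and edge set $E_X\setminus F$. A graph $G'=(S,E')$ is a $t$-spanner for $S$ if the shortest-path distance in $G'$ satisfies $\delta_{G'}(p,q)\le t|pq|$ for all $p,q$. The length of a walk is the sum of its edge weights. Construction (general $f$ with $1\le f\le (n-1)/2$): for each edge $\{a,b\}\in E'$, list the points of $S\setminus\{a,b\}$ as $c_1,\dots,c_{n-2}$ in non-decreasing order of $|ac_i|+|c_ib|$ (ties broken arbitrarily) and let $C_{ab}=\{c_1,\dots,c_{2f-1}\}$; then $G=(S,E)$ with $E=E'\cup\{\{a,c\},\{c,b\}:\{a,b\}\in E',\ c\in C_{ab}\}$. For $f=1$, $C_{ab}$ consists of a single point minimizing $|ac|+|cb|$ over $c\in S\setminus\{a,b\}$. *)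

(* Defs.v *)
From mathcomp Require Import all_boot all_order all_algebra.
Set Implicit Arguments. Unset Strict Implicit. Unset Printing Implicit Defensive.
Import Order.TTheory GRing.Theory Num.Theory.
Local Open Scope ring_scope.

Section Defs.
Variables (R : realFieldType) (T : finType).

Definition is_metric (d : T -> T -> R) : Prop :=
  [/\ forall x, d x x = 0,
      forall x y, x != y -> 0 < d x y,
      forall x y, d x y = d y x &
      forall x y z, d x z <= d x y + d y z].

Definition simple_graph (e : rel T) : Prop :=
  (forall x, ~~ e x x) /\ (forall x y, e x y = e y x).

Definition walk (e : rel T) (p q : T) (s : seq T) : bool :=
  path e p s && (last p s == q).

Definition wlen (d : T -> T -> R) (p : T) (s : seq T) : R :=
  \sum_(w <- pairmap d p s) w.

(* Shortest-path distance is attained by a walk (finite graph), so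
   delta_G(p,q) <= t |pq| iff some walk from p to q has length <= t |pq|. *)
Definition is_spanner (d : T -> T -> R) (e : rel T) (t : R) : Prop :=
  forall p q, exists s, walk e p q s /\ wlen d p s <= t * d p q.

Definition shortest_path (d : T -> T -> R) (e : rel T) (p q : T) (s : seq T)
  : Prop :=
  [/\ walk e p q s, uniq (p :: s) &
      forall s', walk e p q s' -> wlen d p s <= wlen d p s'].

(* C is a valid choice, for f = 1, of the set C_ab = {C a b} for every edge
   {a,b} of E' : C a b is a point of S \ {a,b} minimizing |ac| + |cb|
   (ties broken arbitrarily, but one choice per unordered edge). *)
Definition valid_choice (d : T -> T -> R) (E' : rel T) (C : T -> T -> T)
  : Prop :=
  forall a b, E' a b ->
    [/\ C a b = C b a, C a b != a, C a b != b &
        forall c, c != a -> c != b -> d a (C a b) + d (C a b) b <= d a c + d c b].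

Definition construct (E' : rel T) (C : T -> T -> T) : rel T :=
  fun x y => E' x y ||
    [exists a, exists b, E' a b &&
       [|| (x == a) && (y == C a b), (x == C a b) && (y == a),
           (x == C a b) && (y == b) | (x == b) && (y == C a b)]].

Definition matching_in (E F : rel T) : Prop :=
  [/\ forall x y, F x y = F y x,
      forall x y, F x y -> E x y &
      forall x y z, F x y -> F x z -> y = z].

Definition remove_edges (E F : rel T) : rel T := fun x y => E x y && ~~ F x y.

Definition walk_uses (F : rel T) (p : T) (s : seq T) : bool :=
  has (fun xy => F xy.1 xy.2) (zip (p :: s) s).

End Defs.

(* Main.v *)
Require Import Defs.
From mathcomp Require Import all_boot all_order all_algebra.
From mathcomp Require Import lra zify.
Import Order.TTheory GRing.Theory Num.Theory.
Local Open Scope ring_scope.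

Theorem lemma1 (R : realFieldType) (T : finType) (d : T -> T -> R) (t : R)
    (E' : rel T) (C : T -> T -> T) (F : rel T) (p q : T) (P' : seq T) :
  is_metric d -> (3 <= #|T|)%N -> 1 <= t ->
  simple_graph E' -> is_spanner d E' t ->
  valid_choice d E' C ->
  matching_in (construct E' C) F ->
  shortest_path d E' p q P' ->
  walk_uses F p P' -> (2 <= size P')%N ->
  exists W : seq T, walk (remove_edges (construct E' C) F) p q W /\
    wlen d p W <= 3 * wlen d p P'.
Proof.
move=> [d0 dpos dsym dtri] _ _ _ _ VC [Fsym FE Fm] [/andP[Pp /eqP Pl] Pu _] _ Psz.
set G := remove_edges (construct E' C) F.
have dge0 : forall x y, 0 <= d x y.
  move=> x y; case: (eqVneq x y) => [->|nxy]; first by rewrite d0.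
  exact: ltW (dpos _ _ nxy).
have wlen_cons : forall a x s, wlen d a (x :: s) = d a x + wlen d x s.
  by move=> a x s; rewrite /wlen /= big_cons.
have wlen_nil : forall a, wlen d a [::] = 0 by move=> a; rewrite /wlen /= big_nil.
have cE : forall x y, E' x y -> construct E' C x y by move=> x y h; rewrite /construct h.
have cac : forall a b, E' a b -> construct E' C a (C a b).
  move=> a b h; apply/orP; right; apply/existsP; exists a; apply/existsP; exists b.
  by rewrite h /= !eqxx.
have ccb : forall a b, E' a b -> construct E' C (C a b) b.
  move=> a b h; apply/orP; right; apply/existsP; exists a; apply/existsP; exists b.
  by rewrite h /= !eqxx !orbT.
have adj : forall a b x, F a b -> F b x -> x = a.
  by move=> a b x h1 h2; apply: (Fm b); [|rewrite Fsym].
have GN : forall x y, E' x y -> ~~ F x y -> G x y.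
  by move=> x y h1 h2; rewrite /G /remove_edges cE.
have Gac : forall a b, E' a b -> F a b -> G a (C a b).
  move=> a b hE hF; rewrite /G /remove_edges cac //=; apply/negP => hF'.
  have [_ _ hb _] := VC a b hE.
  have e := Fm _ _ _ hF hF'.
  by rewrite -e eqxx in hb.
have Gcb : forall a b, E' a b -> F a b -> G (C a b) b.
  move=> a b hE hF; rewrite /G /remove_edges ccb //=; apply/negP => hF'.
  have [_ ha _ _] := VC a b hE.
  rewrite Fsym in hF'.
  have e := adj _ _ _ hF hF'.
  by rewrite e eqxx in ha.
have Nx : forall a b s, E' a b -> ~~ F a b ->
    (exists Wr, walk G b (last b s) Wr /\ wlen d b Wr <= 3 * wlen d b s) ->
    exists W, walk G a (last b s) W /\ wlen d a W <= 3 * wlen d a (b :: s).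
  move=> a b s hE hF [Wr [/andP[hw1 hw2] hl]]; exists (b :: Wr); split.
    by rewrite /walk /= GN // hw1.
  rewrite !wlen_cons; have := dge0 a b; lra.
have FNx : forall a b x s, E' a b -> F a b -> E' b x -> ~~ F b x -> x != a -> x != b ->
    (exists Wr, walk G x (last x s) Wr /\ wlen d x Wr <= 3 * wlen d x s) ->
    exists W, walk G a (last x s) W /\ wlen d a W <= 3 * wlen d a (b :: x :: s).
  move=> a b x s hE hF hE2 hF2 hxa hxb [Wr [/andP[hw1 hw2] hl]].
  exists [:: C a b, b, x & Wr]; split.
    by rewrite /walk /= Gac // Gcb // GN // hw1.
  have [_ _ _ hm] := VC a b hE; have := hm x hxa hxb.
  have := dtri a b x; have := dsym x b; have := dge0 a b.
  rewrite !wlen_cons; lra.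
have NF : forall u a b, E' u a -> ~~ F u a -> E' a b -> F a b -> u != a -> u != b ->
    exists W, walk G u b W /\ wlen d u W <= 3 * wlen d u [:: a; b].
  move=> u a b hE hF hE2 hF2 hua hub.
  exists [:: a; C a b; b]; split.
    by rewrite /walk /= GN // Gac // Gcb // eqxx.
  have [_ _ _ hm] := VC a b hE2; have := hm u hua hub.
  have := dtri u a b; have := dsym a u; have := dge0 a b; have := dge0 u a.
  rewrite !wlen_cons !wlen_nil; lra.
have FNF : forall u a b x, E' u a -> F u a -> E' a b -> ~~ F a b -> E' b x -> F b x ->
    u != a -> u != b -> u != x -> a != b -> a != x -> b != x ->
    exists W, walk G u x W /\ wlen d u W <= 3 * wlen d u [:: a; b; x].
  move=> u a b x hE1 hF1 hE2 hF2 hE3 hF3 hua hub hux hab hax hbx.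
  have [_ cna cnb hm2] := VC a b hE2.
  have [_ _ _ hm1] := VC u a hE1.
  have [_ _ _ hm3] := VC b x hE3.
  have := dge0 u a; have := dge0 a b; have := dge0 b x.
  case: (eqVneq (C a b) u) => [cu|cnu].
    exists [:: b; C b x; x]; split.
      rewrite /walk /= Gac // Gcb // eqxx !andbT /G /remove_edges -cu ccb //=.
      apply/negP => hub'; rewrite cu in hub'.
      by move: hab; rewrite (Fm _ _ _ hF1 hub') eqxx.
    have := hm3 a hab hax; have := dtri u a b; have := dtri a b x; have := dsym b a.
    rewrite !wlen_cons !wlen_nil; lra.
  case: (eqVneq (C a b) x) => [cx|cnx].
    exists [:: C u a; a; x]; split.
      rewrite /walk /= Gac // Gcb // eqxx !andbT /G /remove_edges -cx cac //=.
      apply/negP => hax'; rewrite cx in hax'.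
      have hau : F a u by rewrite Fsym.
      by move: hux; rewrite (Fm _ _ _ hax' hau) eqxx.
    have hbu : b != u by rewrite eq_sym.
    have hba : b != a by rewrite eq_sym.
    have := hm1 b hbu hba.
    have := dtri u a b; have := dtri a b x; have := dsym b a.
    rewrite !wlen_cons !wlen_nil; lra.
  exists [:: C u a; a; b; C b x; x]; split.
    by rewrite /walk /= Gac // Gcb // GN // Gac // Gcb // eqxx.
  have := hm1 (C a b) cnu cna; have := hm3 (C a b) cnb cnx.
  have := hm2 u hua hub; have hxa : x != a by rewrite eq_sym.
  have hxb : x != b by rewrite eq_sym.
  have := hm2 x hxa hxb.
  have := dtri u a (C a b); have := dtri (C a b) b x.
  have := dtri u a b; have := dtri a b x.
  have := dsym (C a b) a; have := dsym b (C a b); have := dsym a u; have := dsym x b; have := dsym b a.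
  rewrite !wlen_cons !wlen_nil; lra.
have triv : forall v, exists W, walk G v (last v [::]) W /\ wlen d v W <= 3 * wlen d v [::].
  by move=> v; exists [::]; rewrite /walk /= eqxx wlen_nil mulr0.
have key : forall n v0 s, (size s <= n)%N -> path E' v0 s -> uniq (v0 :: s) ->
    ((2 <= size s)%N \/ forall y, s = [:: y] -> ~~ F v0 y) ->
    exists W, walk G v0 (last v0 s) W /\ wlen d v0 W <= 3 * wlen d v0 s.
  elim=> [|n IH] v0 [|v1 s] hsz hp hu hok; first exact: triv; first by []; first exact: triv.
  case/andP: hp => e01 hp.
  case: s hsz hp hu hok => [|v2 s] hsz hp hu hok.
    case: hok => [//|hok]; have nF := hok v1 erefl.
    by apply: (Nx v0 v1 [::]) => //; exact: triv.
  case/andP: hp => e12 hp.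
  move: (hu); rewrite /= !in_cons !negb_or => /and3P[/and3P[n01 n02 n0s] /andP[n12 n1s] /andP[n2s us]].
  case: (boolP (F v0 v1)) => f01.
    have nf12 : ~~ F v1 v2.
      apply/negP => f12; have e := adj _ _ _ f01 f12.
      by rewrite e eqxx in n02.
    case: s hsz hp hu n0s n1s n2s us hok => [|v3 s] hsz hp hu n0s n1s n2s us hok.
      have n20 : v2 != v0 by rewrite eq_sym.
      have n21 : v2 != v1 by rewrite eq_sym.
      exact: (FNx v0 v1 v2 [::] e01 f01 e12 nf12 n20 n21 (triv v2)).
    case/andP: hp => e23 hp.
    move: n0s n1s n2s; rewrite !in_cons !negb_or => /andP[n03 n0s] /andP[n13 n1s] /andP[n23 n2s].
    case: (boolP (F v2 v3 && (s == [::]))) => [/andP[f23 /eqP s0]|nb].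
      subst s; exact: (FNF v0 v1 v2 v3).
    have n20 : v2 != v0 by rewrite eq_sym.
    have n21 : v2 != v1 by rewrite eq_sym.
    apply: (FNx v0 v1 v2 (v3 :: s) e01 f01 e12 nf12 n20 n21).
    apply: IH.
    - by move: hsz => /=; rewrite ltnS => /ltnW.
    - by rewrite /= e23.
    - by rewrite /= in_cons negb_or n23 n2s.
    case: s {hsz hp hu n0s n1s n2s us hok} nb => [|v4 s] nb.
      by right => y [<-]; move: nb; rewrite eqxx andbT.
    by left.
  case: (boolP (F v1 v2 && (s == [::]))) => [/andP[f12 /eqP s0]|nb].
    subst s; exact: (NF v0 v1 v2).
  apply: (Nx v0 v1 (v2 :: s) e01 f01).
  apply: IH.
  - by move: hsz => /=; rewrite ltnS.
  - by rewrite /= e12.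
  - by case/andP: hu.
  case: s {hsz hp hu n0s n1s n2s us hok} nb => [|v3 s] nb.
    by right => y [<-]; move: nb; rewrite eqxx andbT.
  by left.
have [W [hW hl]] := key (size P') p P' (leqnn _) Pp Pu (or_introl Psz).
by exists W; rewrite -Pl.
Qed.
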